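(* Let $A\in P(n)$ have rank one. Then for every unitarily invariant norm $N$ on $M_n$, $$I(N,A)=\min_{1\le i\le n}A_{ii}.$$
   Context: $M_n$ is the set of complex $n\times n$ matrices, $P(n)$ the positive semidefinite ones, $\circ$ the Hadamard product. $I(N,A)=\min\{N(A\circ B): B\in P(n),\ N(B)=1\}$. *)

(* Defs.v *)
From HB Require Import structures.
From mathcomp Require Import all_boot all_order all_algebra.
From mathcomp Require Import complex.
From mathcomp Require Import reals.
Set Implicit Arguments. Unset Strict Implicit. Unset Printing Implicit Defensive.
Import Order.TTheory GRing.Theory Num.Theory.
Local Open Scope ring_scope.

Definition adjmx {C : numClosedFieldType} {m n} (A : 'M[C]_(m, n)) : 'M[C]_(n, m) :=
  (map_mx Num.conj A)^T.

Definition unitary {C : numClosedFieldType} {n} (U : 'M[C]_n) : Prop :=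
  U *m adjmx U = 1%:M.

(* positive semidefinite: Hermitian with nonnegative quadratic form
   (in a numClosedFieldType, 0 <= z means z is real and nonnegative) *)
Definition psd {C : numClosedFieldType} {n} (A : 'M[C]_n) : Prop :=
  adjmx A = A /\ forall x : 'cV[C]_n, 0 <= (adjmx x *m A *m x) 0 0.

Definition hadamard {C : numClosedFieldType} {m n} (A B : 'M[C]_(m, n)) : 'M[C]_(m, n) :=
  \matrix_(i, j) (A i j * B i j).

Definition is_matrix_norm {R : realType} {n} (N : 'M[R[i]]_n -> R) : Prop :=
  (forall A, 0 <= N A) /\
  (forall A, N A = 0 -> A = 0) /\
  (forall (c : R[i]) A, ((N (c *: A))%:C)%C = `|c| * ((N A)%:C)%C) /\
  (forall A B, N (A + B) <= N A + N B).

Definition unitarily_invariant_norm {R : realType} {n} (N : 'M[R[i]]_n -> R) : Prop :=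
  is_matrix_norm N /\
  forall U V A : 'M[R[i]]_n, unitary U -> unitary V -> N (U *m A *m V) = N A.

(* v = I(N,A) = min { N(A o B) : B in P(n), N(B) = 1 }, the minimum being attained *)
Definition is_I {R : realType} {n} (N : 'M[R[i]]_n -> R) (A : 'M[R[i]]_n) (v : R) : Prop :=
  (exists B, psd B /\ N B = 1 /\ N (hadamard A B) = v) /\
  (forall B, psd B -> N B = 1 -> v <= N (hadamard A B)).

(* Main.v *)
Require Import Defs.
From HB Require Import structures.
From mathcomp Require Import all_boot all_order all_algebra.
From mathcomp Require Import complex.
From mathcomp Require Import reals ring lra.
Import Order.TTheory GRing.Theory Num.Theory.
Local Open Scope ring_scope.

Section Scal.
Variable C : numClosedFieldType.
Definition phs (d : C) : C := if d == 0 then 1 else d / `|d|.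
Definition sq (d : C) : C := sqrtC (1 - `|d| ^+ 2).
Definition w1 (d : C) : C := phs d * (`|d| + 'i * sq d).
Definition w2 (d : C) : C := phs d * (`|d| - 'i * sq d).

Lemma w12 d : w1 d + w2 d = 2%:R * d.
Proof.
rewrite /w1 /w2 -mulrDr addrACA subrr addr0 /phs.
case: eqP => [->|/eqP d0]; first by rewrite normr0 addr0 !mulr0.
rewrite -mulr2n mulr_natl mulrnAr; by rewrite divfK // normr_eq0.
Qed.

Lemma phsJ d : phs d * Num.conj (phs d) = 1.
Proof.
rewrite -normCK /phs; case: eqP => [_|/eqP d0]; first by rewrite normr1 expr1n.
by rewrite normf_div normr_id divff ?expr1n // normr_eq0.
Qed.

Lemma w1J d : `|d| <= 1 -> w1 d * Num.conj (w1 d) = 1.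
Proof.
move=> hd; rewrite /w1 rmorphM /= mulrACA phsJ mul1r.
have hs : Num.conj (sq d) = sq d.
  apply: geC0_conj; rewrite sqrtC_ge0 subr_ge0 exprn_ile1 //.
rewrite rmorphD rmorphM /= conj_normC conjCi hs.
have: sq d ^+ 2 = 1 - `|d| ^+ 2 by rewrite sqrtCK.
move=> e.
have -> : forall a b c : C, (a + c * b) * (a + - c * b) = a ^+ 2 - c ^+ 2 * b ^+ 2.
  by move=> a b c; ring.
by rewrite sqrCi e; ring.
Qed.
Lemma w2J d : `|d| <= 1 -> w2 d * Num.conj (w2 d) = 1.
Proof.
move=> hd; rewrite /w2 rmorphM /= mulrACA phsJ mul1r.
have hs : Num.conj (sq d) = sq d.
  apply: geC0_conj; rewrite sqrtC_ge0 subr_ge0 exprn_ile1 //.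
rewrite rmorphB rmorphM /= conj_normC conjCi hs.
have: sq d ^+ 2 = 1 - `|d| ^+ 2 by rewrite sqrtCK.
move=> e.
have -> : forall a b c : C, (a - c * b) * (a - - c * b) = a ^+ 2 - c ^+ 2 * b ^+ 2.
  by move=> a b c; ring.
by rewrite sqrCi e; ring.
Qed.
End Scal.

Section Contr.
Variables (R : realType) (n : nat) (N : 'M[R[i]]_n -> R).
Hypothesis hN : unitarily_invariant_norm N.

Lemma realC_inj (x y : R) : (x%:C)%C = (y%:C)%C -> x = y.
Proof. by case. Qed.

Lemma scaleN (c : R) X : 0 <= c -> N ((c%:C)%C *: X) = c * N X.
Proof.
move=> c0; case: hN => [[_ [_ [hs _]]] _].
have := hs (c%:C)%C X.
rewrite ger0_norm ?lecR //.
move=> h; apply: realC_inj; rewrite h.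
by rewrite -rmorphM.
Qed.

Lemma unitary_diag (w : 'rV[R[i]]_n) : (forall i, w 0 i * Num.conj (w 0 i) = 1) ->
  unitary (diag_mx w).
Proof.
move=> hw; rewrite /unitary /adjmx; apply/matrixP => i j.
rewrite mul_diag_mx !mxE.
case: (eqVneq i j) => [<-|nij]; first by rewrite ?eqxx /= !mulr1n hw.
by rewrite ?(negPf nij) ?eq_sym ?(negPf nij) /= !mulr0n rmorph0 mulr0.
Qed.

Lemma unitary1 : unitary (1%:M : 'M[R[i]]_n).
Proof.
by rewrite /unitary /adjmx mul1mx map_mx1 trmx1.
Qed.

Lemma contr_split (d : 'rV[R[i]]_n) : (forall i, `|d 0 i| <= 1) ->
  exists D1 D2, [/\ unitary D1, unitary D2 &
     diag_mx d = ((2^-1 : R)%:C)%C *: (D1 + D2)].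
Proof.
move=> hd; exists (diag_mx (map_mx (@w1 _) d)), (diag_mx (map_mx (@w2 _) d)).
split; [apply: unitary_diag => i; rewrite mxE; exact: w1J|
        apply: unitary_diag => i; rewrite mxE; exact: w2J|].
apply/matrixP => i j; rewrite !mxE.
case: (i == j); last by rewrite !mulr0n addr0 mulr0.
rewrite !mulr1n w12 mulrA.
have -> : ((2^-1 : R)%:C)%C * 2%:R = 1 :> R[i].
  apply/eqP; rewrite eq_complex /= !mul0r !addr0 mulr0 subr0 eqxx andbT -[1 + 1]/(2%:R).
  by rewrite mulVf // pnatr_eq0.
by rewrite mul1r.
Qed.

Lemma contrL (d : 'rV[R[i]]_n) X : (forall i, `|d 0 i| <= 1) ->
  N (diag_mx d *m X) <= N X.
Proof.
move=> /contr_split [D1 [D2 [u1 u2 ->]]].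
case: (hN) => [[_ [_ [_ ht]]] hu].
rewrite -scalemxAl scaleN ?invr_ge0 ?ler0n // mulmxDl.
apply: (le_trans (ler_wpM2l _ (ht _ _))); first by rewrite invr_ge0 ler0n.
have e1 : N (D1 *m X) = N X by rewrite -[D1 *m X]mulmx1 hu //; exact: unitary1.
have e2 : N (D2 *m X) = N X by rewrite -[D2 *m X]mulmx1 hu //; exact: unitary1.
by rewrite e1 e2; lra.
Qed.

Lemma contrR (d : 'rV[R[i]]_n) X : (forall i, `|d 0 i| <= 1) ->
  N (X *m diag_mx d) <= N X.
Proof.
move=> /contr_split [D1 [D2 [u1 u2 ->]]].
case: (hN) => [[_ [_ [_ ht]]] hu].
rewrite -scalemxAr scaleN ?invr_ge0 ?ler0n // mulmxDr.
apply: (le_trans (ler_wpM2l _ (ht _ _))); first by rewrite invr_ge0 ler0n.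
have e1 : N (X *m D1) = N X by rewrite -[X *m D1]mul1mx mulmxA hu //; exact: unitary1.
have e2 : N (X *m D2) = N X by rewrite -[X *m D2]mul1mx mulmxA hu //; exact: unitary1.
by rewrite e1 e2; lra.
Qed.
End Contr.


Lemma rank1_fact (F : fieldType) n (A : 'M[F]_n) : \rank A = 1%N ->
  exists (u v : 'I_n -> F), forall i j, A i j = u i * v j.
Proof.
move=> hr; have := mulmx_base A; move: (col_base A) (row_base A); rewrite hr.
move=> C Rb e; exists (fun i => C i 0), (fun j => Rb 0 j) => i j.
by rewrite -e mxE big_ord1.
Qed.

Lemma quad_delta (F : fieldType) n (y : 'rV[F]_n) (x : 'cV[F]_n) i j :
  (y *m delta_mx i j *m x) 0 0 = y 0 i * x j 0.
Proof.
rewrite mxE (bigD1 j) //= big1 ?addr0.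
  congr (_ * _); rewrite mxE (bigD1 i) //= big1 ?addr0.
    by rewrite mxE !eqxx mulr1.
  by move=> k /negPf nk; rewrite mxE nk mulr0.
move=> k /negPf nk; rewrite mxE big1 ?mul0r // => l _.
by rewrite mxE nk andbF mulr0.
Qed.

Lemma quad_diag (R : realType) n (A : 'M[R[i]]_n) (j : 'I_n) :
  (adjmx (delta_mx j ord0 : 'cV[R[i]]_n) *m A *m (delta_mx j ord0 : 'cV[R[i]]_n)) ord0 ord0 = A j j.
Proof.
rewrite mxE (bigD1 j) //= big1 ?addr0.
  rewrite [delta_mx _ _ _ _]mxE !eqxx mulr1 mxE (bigD1 j) //= big1 ?addr0.
    by rewrite /adjmx !mxE !eqxx /= rmorph1 mul1r.
  by move=> k /negPf nk; rewrite /adjmx !mxE nk /= rmorph0 mul0r.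
by move=> k /negPf nk; rewrite [delta_mx _ _ _ _]mxE nk /= mulr0.
Qed.

Lemma le_norms (C : numDomainType) (p q p0 q0 : C) :
  0 < p -> 0 < q -> 0 < p0 -> 0 < q0 ->
  p * q0 = p0 * q -> p0 * q0 <= p * q -> p0 <= p.
Proof.
move=> hp hq hp0 hq0 e le.
rewrite real_leNgt ?gtr0_real //; apply/negP => lt.
have h1 : p * q0 < p * q.
  by apply: (lt_le_trans _ le); rewrite ltr_pM2r.
have h2 : p0 * q < p0 * q0 by rewrite -e ltr_pM2r.
rewrite ltr_pM2l // in h1; rewrite ltr_pM2l // in h2.
by move: (lt_trans h1 h2); rewrite ltxx.
Qed.

Theorem proposition5p2 (R : realType) (n : nat) (A : 'M[R[i]]_n)
  (N : 'M[R[i]]_n -> R) :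
  psd A -> \rank A = 1%N -> unitarily_invariant_norm N ->
  forall i0 : 'I_n, (forall j : 'I_n, A i0 i0 <= A j j) ->
  exists m : R, (m%:C)%C = A i0 i0 /\ is_I N A m.
Proof.
move=> [hH hq] hr hN i0 hmin.
have hd : forall j, 0 <= A j j by move=> j; rewrite -quad_diag; apply: hq.
have [m [em m0]] : exists m : R, (m%:C)%C = A i0 i0 /\ 0 <= m.
  move: (hd i0); case: (A i0 i0) => a b; rewrite lecE /= => /andP [/eqP -> a0].
  by exists a.
exists m; split => //.
have hN' := hN; case: hN' => [[Nge0 [N0 [Nsc Ntr]]] Nu].
split.
- pose E : 'M[R[i]]_n := delta_mx i0 i0.
  have NE : 0 < N E.
    rewrite lt_def Nge0 andbT; apply/eqP => /N0 /matrixP /(_ i0 i0).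
    by rewrite !mxE !eqxx /= => /eqP; rewrite oner_eq0.
  have c0 : 0 <= (N E)^-1 by rewrite invr_ge0 ltW.
  have cc : Num.conj (((N E)^-1)%:C%C) = ((N E)^-1)%:C%C.
    by apply: geC0_conj; rewrite lecR.
  have NB : N (((N E)^-1)%:C%C *: E) = 1.
    by rewrite scaleN // mulVf // gt_eqF.
  exists (((N E)^-1)%:C%C *: E); split; [split|split].
  + apply/matrixP => i j; rewrite /adjmx !mxE rmorphM /= cc rmorph_nat.
    by rewrite andbC.
  + move=> x; rewrite -scalemxAr -scalemxAl; set Q := (_ *m _ *m _); rewrite mxE /Q quad_delta /adjmx !mxE.
    by apply: mulr_ge0; rewrite ?lecR // -normCKC exprn_ge0.
  + exact: NB.
  + have -> : hadamard A (((N E)^-1)%:C%C *: E) = (m%:C)%C *: (((N E)^-1)%:C%C *: E).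
      apply/matrixP => i j; rewrite !mxE.
      case: (boolP (i == i0)) => [/eqP->|/negPf ni];
      case: (boolP (j == i0)) => [/eqP->|/negPf nj];
        rewrite ?eqxx ?ni ?nj /= ?mulr0 ?em //.
    by rewrite scaleN // NB mulr1.
- move=> B _ NB1.
  case: (boolP (m == 0)) => [/eqP -> | mn0]; first exact: Nge0.
  have mp : 0 < m by rewrite lt_def mn0 m0.
  have [u [v huv]] := rank1_fact _ _ _ hr.
  have Ajpos : forall j, 0 < A j j.
    by move=> j; apply: (lt_le_trans _ (hmin j)); rewrite -em ltcR.
  have unz : forall j, u j != 0 /\ v j != 0.
    move=> j; have := Ajpos j; rewrite huv lt_def mulf_eq0 negb_or.
    by case/andP => /andP [].
  have herm : forall i j, Num.conj (A j i) = A i j.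
    move=> i j; have := congr1 (fun M : 'M_n => M i j) hH.
    by rewrite /adjmx !mxE.
  have nrel : forall i, `|u i| * `|v i0| = `|u i0| * `|v i|.
    move=> i; rewrite -!normrM -!huv -herm norm_conjC //.
  have ndiag : forall i, `|u i0| * `|v i0| <= `|u i| * `|v i|.
    move=> i; rewrite -!normrM -!huv !ger0_norm //; exact: hmin.
  have upos : forall i, 0 < `|u i| by move=> i; rewrite normr_gt0; case: (unz i).
  have vpos : forall i, 0 < `|v i| by move=> i; rewrite normr_gt0; case: (unz i).
  have ule : forall i, `|u i0| <= `|u i|.
    move=> i; apply: (@le_norms _ _ _ _ _ (upos i) (vpos i) (upos i0) (vpos i0)).
      exact: nrel.
    exact: ndiag.
  have vle : forall i, `|v i0| <= `|v i|.
    move=> i; apply: (@le_norms _ _ _ _ _ (vpos i) (upos i) (vpos i0) (upos i0)).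
      by rewrite mulrC -nrel mulrC.
    by rewrite mulrC [X in _ <= X]mulrC; exact: ndiag.
  pose d1 : 'rV[R[i]]_n := \row_i (u i0 / u i).
  pose d2 : 'rV[R[i]]_n := \row_i (v i0 / v i).
  have hd1 : forall i, `|d1 0 i| <= 1.
    by move=> i; rewrite mxE normf_div ler_pdivrMr // mul1r.
  have hd2 : forall i, `|d2 0 i| <= 1.
    by move=> i; rewrite mxE normf_div ler_pdivrMr // mul1r.
  have eq : diag_mx d1 *m hadamard A B *m diag_mx d2 = (m%:C)%C *: B.
    apply/matrixP => i j; rewrite mul_mx_diag mxE mul_diag_mx !mxE em !huv.
    have [ui _] := unz i; have [_ vj] := unz j.
    by field; rewrite vj ui.
  apply: (le_trans _ (@contrL _ _ _ hN d1 (hadamard A B) hd1)).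
  apply: (le_trans _ (@contrR _ _ _ hN d2 _ hd2)).
  by rewrite eq scaleN // NB1 mulr1.
Qed.
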